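(* Let $T>0$, $m\in\,]0,1[$ and let $\mathcal{U}(t,x)=t^{-\alpha}\left(D+\tilde k|x|^2t^{-2\alpha}\right)^{-\frac{1}{1-m}}$ for $t>0$, $x\in\mathbb{R}$, with $\alpha=\frac{1}{m+1}$, $\tilde k=\frac{1-m}{2(m+1)m}$, $D=\left(\frac{I}{\sqrt{\tilde k}}\right)^{\frac{2(1-m)}{m+1}}$, $I=\int_{-\pi/2}^{\pi/2}[\cos(x)]^{\frac{2m}{1-m}}dx$. Then: (i) if $\frac13<m<1$, there exist $p\ge2$ and a constant $\mathcal{C}_p$ (depending on $T$) such that for all $0\le s<\ell\le T$, \[\int_{]s,\ell]\times\mathbb{R}}\left(\mathcal{U}(t,x)\right)^{\frac{p(m-1)}{2}+1}dt\,dx\le\mathcal{C}_p(\ell-s);\] (ii) if $\frac13<m<1$, $\int_{]0,T]\times\mathbb{R}}(\mathcal{U}(t,x))^m\,dt\,dx<+\infty$; (iii) if $\frac15<m<1$, $\int_{]0,T]\times\mathbb{R}}(\mathcal{U}(t,x))^{2m}\,dt\,dx<+\infty$; (iv) if $\frac35<m<1$, then for every $\kappa>0$, $\int_{\mathbb{R}}|x|^4\,\mathcal{U}(\kappa,x)\,dx<+\infty$. *)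

(* Defs.v *)
From HB Require Import structures.
From mathcomp Require Import all_boot all_order all_algebra.
From mathcomp Require Import all_classical all_reals all_analysis.
Set Implicit Arguments. Unset Strict Implicit. Unset Printing Implicit Defensive.
Import Order.TTheory GRing.Theory Num.Theory.
Import numFieldNormedType.Exports.
Local Open Scope classical_set_scope.
Local Open Scope ring_scope.

Section Barenblatt.
Variable R : realType.

Definition alpha (m : R) : R := (m + 1)^-1.
Definition ktilde (m : R) : R := (1 - m) / (2 * (m + 1) * m).
Definition Ical (m : R) : R :=
  Rintegral (@lebesgue_measure R) `[- (pi / 2), pi / 2]%classic
    (fun x => (cos x) `^ (2 * m / (1 - m))).
Definition Dcal (m : R) : R :=
  (Ical m / Num.sqrt (ktilde m)) `^ (2 * (1 - m) / (m + 1)).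
Definition Ucal (m t x : R) : R :=
  t `^ (- alpha m) *
  (Dcal m + ktilde m * `|x| ^+ 2 * t `^ (- (2 * alpha m))) `^ (- (1 - m)^-1).

End Barenblatt.

(* Main.v *)
Require Import Defs.
From HB Require Import structures.
From mathcomp Require Import all_boot all_order all_algebra.
From mathcomp Require Import all_classical all_reals all_analysis.
From mathcomp Require Import ring lra measurable_realfun.
Import Order.TTheory GRing.Theory Num.Theory.
Import numFieldNormedType.Exports.
Local Open Scope classical_set_scope.
Local Open Scope ring_scope.

Section Aux.
Context {R : realType}.
Local Notation mu := (@lebesgue_measure R).

Lemma aff_is_derive (c x : R) : is_derive x 1 (fun y : R => 1 + y / c) c^-1.
Proof.
have -> : (fun y : R => 1 + y / c) = (cst 1 + ( *:%R c^-1))%R.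
  by apply/funext => y /=; rewrite mulrC.
apply: is_derive_eq.
by rewrite add0r /GRing.scale /= mulr1.
Qed.
Lemma powaff_is_derive (c e x : R) : 0 < 1 + x / c ->
  is_derive x 1 (fun y : R => (1 + y / c) `^ e) (e * (1 + x / c) `^ (e - 1) * c^-1).
Proof.
move=> hx.
have da := aff_is_derive c x.
have dp := is_derive1_powR e hx.
have dcomp : derivable ((fun y : R => y `^ e) \o (fun y : R => 1 + y / c)) x 1.
  apply/derivable1_diffP; apply: differentiable_comp.
    apply/derivable1_diffP; by case: da.
  apply/derivable1_diffP; by case: dp.
apply: DeriveDef; first exact: dcomp.
have [da1 _] := da; have [dp1 _] := dp.
rewrite -derive1E (derive1_comp da1 dp1).
by rewrite !derive1E !derive_val.
Qed.
Lemma powR_cont_pos (e a : R) : 0 < a -> {for a, continuous (fun x : R => x `^ e)}.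
Proof.
move=> a0; apply: differentiable_continuous; apply/derivable1_diffP.
by apply: derivable_powR; rewrite in_itv/= a0.
Qed.

Lemma powR_neg_le (e a b : R) : 0 < e -> 0 < a -> a <= b -> b `^ (- e) <= a `^ (- e).
Proof.
move=> e0 a0 ab; rewrite !powRN lef_pV2 ?posrE ?powR_gt0 ?(lt_le_trans a0)//.
by apply: (ge0_ler_powR (ltW e0)) => //; rewrite nnegrE ?ltW ?(lt_le_trans a0).
Qed.

Lemma powR_cvgy0 (e : R) : 0 < e -> (fun y => y `^ (- e)) y @[y --> +oo] --> 0.
Proof.
move=> e0; apply/cvgrPdist_le => eps eps0.
near=> y; rewrite sub0r normrN ger0_norm ?powR_ge0//.
have Y0 : 0 < eps `^ (- e^-1) by rewrite powR_gt0.
have -> : eps = (eps `^ (- e^-1)) `^ (- e).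
  by rewrite -powRrM mulrN mulNr opprK mulVf ?gt_eqF// powRr1// ltW.
apply: powR_neg_le => //.
Unshelve. all: by end_near. Qed.


Lemma half_int (M c b : R) : 0 <= M -> 0 < c -> 1 < b ->
  (\int[mu]_(x in `[0%R, +oo[) (M * (1 + `|x| / c) `^ (- b))%:E = (M * c / (b - 1))%:E)%E.
Proof.
move=> M0 c0 b1.
pose K := - (M * c / (b - 1)).
pose F := fun x : R => K * (1 + x / c) `^ (1 - b).
have pos x : 0 <= x -> 0 < 1 + x / c by move=> x0; rewrite ltr_pwDl// divr_ge0// ltW.
have dF (x : R) : 0 <= x -> is_derive x 1 F (K * ((1 - b) * (1 + x / c) `^ (1 - b - 1) * c^-1)).
  move=> x0; have := @powaff_is_derive c (1 - b) x (pos x x0).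
  by move=> H; apply: is_deriveZ.
rewrite (@ge0_continuous_FTC2y _ _ F 0 0).
- rewrite /F mul0r addr0 powR1 mulr1 /K EFinN sub0e oppeK //.
- by move=> x x0; rewrite mulr_ge0 ?powR_ge0.
- apply: continuous_subspaceT => x.
  apply: cvgM; first exact: cvg_cst.
  apply: (@continuous_comp _ _ _ (fun x : R => 1 + `|x| / c) (fun y : R => y `^ (- b))).
    apply: cvgD; first exact: cvg_cst.
    apply: cvgM; last exact: cvg_cst.
    exact: norm_continuous.
  by apply: powR_cont_pos; rewrite ltr_pwDl// divr_ge0// ltW.
- have -> : 0 = K * 0 by rewrite mulr0.
  apply: cvgM; first exact: cvg_cst.
  have -> : 1 - b = - (b - 1) by rewrite opprB.
  apply: (cvg_comp (fun x : R => 1 + x / c) (fun y : R => y `^ (- (b - 1))) (G := +oo%R)).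
    apply/cvgryPge => A; near=> x.
    rewrite -lerBlDl ler_pdivlMr//.
  by apply: powR_cvgy0; rewrite subr_gt0.
- by move=> x x0; have [] := dF x (ltW x0).
- apply: cvg_at_right_filter.
  have [d1 _] := dF 0 (lexx 0).
  by apply: differentiable_continuous; apply/derivable1_diffP.
- move=> x; rewrite in_itv/= andbT => x0.
  rewrite derive1E; have [_ ->] := dF x (ltW x0).
  rewrite /K ger0_norm ?ltW//.
  have -> : 1 - b - 1 = - b by rewrite addrAC subrr add0r.
  by field; rewrite gt_eqF// subr_eq0 gt_eqF.
  Unshelve. all: by end_near.
Qed.

Lemma h_cont (M c b : R) : 0 < c -> continuous (fun x : R => M * (1 + `|x| / c) `^ (- b)).
Proof.
move=> c0 x.
apply: cvgM; first exact: cvg_cst.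
apply: (@continuous_comp _ _ _ (fun x : R => 1 + `|x| / c) (fun y : R => y `^ (- b))).
  apply: cvgD; first exact: cvg_cst.
  apply: cvgM; last exact: cvg_cst.
  exact: norm_continuous.
by apply: powR_cont_pos; rewrite ltr_pwDl// divr_ge0// ltW.
Qed.

Lemma full_int (M c b : R) : 0 <= M -> 0 < c -> 1 < b ->
  (\int[mu]_x (M * (1 + `|x| / c) `^ (- b))%:E = (2 * (M * c / (b - 1)))%:E)%E.
Proof.
move=> M0 c0 b1.
rewrite ge0_symfun_integralT.
- by rewrite -set_itvcy half_int// EFinM.
- by move=> x; rewrite mulr_ge0 ?powR_ge0.
- exact: h_cont.
- by move=> x /=; rewrite normrN.
Qed.
End Aux.

Section Mono.
Context d (T : measurableType d) (R : realType) (mu : {measure set T -> \bar R}).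
Local Open Scope ereal_scope.
Lemma le_int_nm (D : set T) (f g : T -> \bar R) : (forall x, D x -> 0 <= f x) ->
  (forall x, D x -> f x <= g x) -> \int[mu]_(x in D) f x <= \int[mu]_(x in D) g x.
Proof.
move=> f0 fg.
rewrite ge0_integralE// [leRHS]ge0_integralE; last first.
  by move=> x Dx; rewrite (le_trans (f0 x Dx) (fg x Dx)).
apply: le_ereal_sup => _ [h hf <-]; exists h => // x.
rewrite (le_trans (hf x))// /patch; case: ifPn => // /[1!inE] Dx.
exact: fg.
Qed.
End Mono.


Section PB.
Context {R : realType}.

Lemma W_lb (D k mu c x : R) : 0 <= mu -> 2 * mu <= D -> 2 * mu <= k -> 0 < c ->
  mu * (1 + `|x| / c) ^+ 2 <= D + k * `|x| ^+ 2 * c ^- 2.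
Proof.
move=> mu0 hD hk c0.
set y := `|x| / c.
have y0 : 0 <= y by rewrite divr_ge0// ltW.
have -> : k * `|x| ^+ 2 * c ^- 2 = k * y ^+ 2.
  by rewrite /y expr_div_n; ring.
have h1 : 0 <= mu * (y - 1) ^+ 2 by rewrite mulr_ge0// sqr_ge0.
have h2 : 2 * mu * y ^+ 2 <= k * y ^+ 2 by rewrite ler_wpM2r// sqr_ge0.
have e1 : mu * (y - 1) ^+ 2 = mu * y ^+ 2 - 2 * mu * y + mu by ring.
have e2 : mu * (1 + y) ^+ 2 = mu * y ^+ 2 + 2 * mu * y + mu by ring.
rewrite e2; rewrite e1 in h1; lra.
Qed.

Lemma Ucal_bound (m t x q : R) (mu : R) : 0 < m -> m < 1 -> 0 < t -> 0 < q ->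
  0 < mu -> 2 * mu <= Dcal m -> 2 * mu <= ktilde m ->
  (Ucal m t x) `^ q <= t `^ (- (alpha m * q)) * mu `^ (- (q / (1 - m)))
     * (1 + `|x| / t `^ alpha m) `^ (- (2 * (q / (1 - m)))).
Proof.
move=> m0 m1 t0 q0 mu0 hD hk.
set a := alpha m; set c := t `^ a; set b := q / (1 - m).
have c0 : 0 < c by rewrite powR_gt0.
have b0 : 0 < b by rewrite divr_gt0// subr_gt0.
set W := Dcal m + ktilde m * `|x| ^+ 2 * t `^ (- (2 * a)).
have hW : t `^ (- (2 * a)) = c ^- 2.
  by rewrite -mulNr mulrC powRrM -powR_invn ?powR_ge0.
have VW : mu * (1 + `|x| / c) ^+ 2 <= W by rewrite /W hW W_lb// ltW.
have V0 : 0 < mu * (1 + `|x| / c) ^+ 2.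
  by rewrite mulr_gt0// exprn_gt0// ltr_pwDl// divr_ge0// ltW.
rewrite /Ucal -/a -/W powRM ?powR_ge0// -!powRrM.
rewrite -mulrA mulNr; apply: ler_wpM2l; first exact: powR_ge0.
have -> : - (1 - m)^-1 * q = - b by rewrite mulNr mulrC.
apply: le_trans (powR_neg_le _ _ _ b0 V0 VW) _.
have e0 : 0 <= 1 + `|x| / c by rewrite addr_ge0// divr_ge0// ltW.
rewrite powRM ?(ltW mu0) ?exprn_ge0//.
by rewrite -(@powR_mulrn _ _ 2)// -powRrM mulrN.
Qed.

Definition Kq (mu m q : R) := 2 * (mu `^ (- (q / (1 - m))) / (2 * (q / (1 - m)) - 1)).

Lemma inner_bound (m t q mu : R) : 0 < m -> m < 1 -> 0 < t -> 0 < q ->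
  0 < mu -> 2 * mu <= Dcal m -> 2 * mu <= ktilde m -> 1 < 2 * (q / (1 - m)) ->
  (\int[@lebesgue_measure R]_x ((Ucal m t x) `^ q)%:E <=
     (Kq mu m q * t `^ (alpha m * (1 - q)))%:E)%E.
Proof.
move=> m0 m1 t0 q0 mu0 hD hk hb.
set M := t `^ (- (alpha m * q)) * mu `^ (- (q / (1 - m))).
have M0 : 0 <= M by rewrite mulr_ge0 ?powR_ge0.
apply: (@le_trans _ _ (\int[@lebesgue_measure R]_x
   (M * (1 + `|x| / t `^ alpha m) `^ (- (2 * (q / (1 - m)))))%:E)%E).
  apply: le_int_nm => x _; first by rewrite lee_fin powR_ge0.
  by rewrite lee_fin; exact: Ucal_bound.
rewrite full_int// ?powR_gt0// lee_fin /Kq /M.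
have -> : alpha m * (1 - q) = - (alpha m * q) + alpha m by ring.
rewrite powRD; last by apply/implyP => _; rewrite gt_eqF.
rewrite le_eqVlt; apply/orP; left; apply/eqP; field.
rewrite subr_eq0 gt_eqF//=.
have hm : 0 < 1 - m by rewrite subr_gt0.
have : 1 * (1 - m) < 2 * (q / (1 - m)) * (1 - m) by rewrite ltr_pM2r.
have -> : 2 * (q / (1 - m)) * (1 - m) = 2 * q by field; rewrite gt_eqF.
move=> h; apply/eqP => h2; lra.
Qed.
End PB.


Section T.
Context {R : realType}.
Local Notation mu := (@lebesgue_measure R).

Lemma mUcal (m q : R) : measurable_fun setT (fun z : R * R => (Ucal m z.1 z.2) `^ q).
Proof.
have mp (r : R) : measurable_fun setT (fun z : R * R => z.1 `^ r).
  exact: (measurableT_comp (measurable_powR r) measurable_fst).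
suff mU : measurable_fun setT (fun z : R * R => Ucal m z.1 z.2).
  exact: (measurableT_comp (measurable_powR q) mU).
rewrite /Ucal.
apply: measurable_funM; first exact: mp.
apply: (measurableT_comp (measurable_powR _)).
apply: measurable_funD; first exact: measurable_cst.
apply: measurable_funM.
  apply: measurable_funM; first exact: measurable_cst.
  apply: measurable_funX.
  by apply: measurableT_comp => //; exact: measurable_snd.
exact: mp.
Qed.

Lemma tonelli_strip (A : set R) (f : R * R -> \bar R) : measurable A ->
  measurable_fun setT f -> (forall z, (0 <= f z)%E) ->
  (\int[(mu \x mu)%E]_(z in A `*` setT) f z = \int[mu]_(t in A) \int[mu]_x f (t, x))%E.
Proof.
move=> mA mf f0.
have mAT : measurable (A `*` [set: R]) by exact: measurableX.
rewrite integral_mkcond fubini_tonelli1.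
- rewrite [RHS]integral_mkcond; apply: eq_integral => t _.
  rewrite /fubini_F /patch; case: ifPn => tA.
    apply: eq_integral => x _; rewrite ifT// inE; split => //.
    by move: tA; rewrite inE.
  rewrite integral0_eq// => x _; rewrite ifF//; apply/negbTE; apply: contra tA.
  by rewrite !inE => -[].
- by apply/(measurable_restrictT _ _).1 => //; exact: measurable_funS mf.
- by move=> z; rewrite /patch; case: ifPn.
Qed.
End T.


Section T.
Context {R : realType}.
Local Notation mu := (@lebesgue_measure R).

Lemma Lt (K g T : R) : 0 <= K -> -1 < g -> 0 < T ->
  (\int[mu]_(t in `]0%R, T]) (K * t `^ g)%:E <= (K / (g + 1) * T `^ (g + 1))%:E)%E.
Proof.
move=> K0 g1 T0.
have g10 : 0 < g + 1 by rewrite -ltrBlDr sub0r.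
pose f := fun t : R => K * t `^ g.
pose Fa := fun t : R => K / (g + 1) * t `^ (g + 1).
pose S := fun n : nat => `[T / n.+2%:R, T]%classic.
have Sn n : 0 < T / n.+2%:R by rewrite divr_gt0.
have SnT n : T / n.+2%:R < T by rewrite ltr_pdivrMr// ltr_pMr// ltr1n.
have US : \bigcup_n S n = `]0%R, T]%classic.
  apply/seteqP; split => t /=.
    move=> [n _]; rewrite /S /= !in_itv/= => /andP[h1 ->]; rewrite andbT.
    exact: lt_le_trans (Sn n) h1.
  rewrite in_itv/= => /andP[t0 tT].
  exists (Num.truncn (T / t)) => //; rewrite /S /= in_itv/= tT andbT.
  rewrite ler_pdivrMr// -ler_pdivrMl// mulrC.
  apply: ltW; apply: (lt_le_trans (truncnS_gt _)).
  by rewrite ler_nat.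
have ndS : nondecreasing_seq S.
  apply/nondecreasing_seqP => n; apply/subsetPset => t; rewrite /S /=.
  rewrite !in_itv/= => /andP[h1 ->]; rewrite andbT.
  apply: le_trans h1; rewrite ler_pdivrMr// mulrAC ler_pdivlMr// ler_pM2l// ler_nat.
  by [].
have mS n : measurable (S n) by exact: measurable_itv.
have mf n : measurable_fun (S n) (fun t => (f t)%:E).
  apply/measurable_EFinP; apply: measurable_funM; first exact: measurable_cst.
  exact: measurable_funS (measurable_powR g).
have f0 n t : S n t -> (0 <= (f t)%:E)%E by move=> _; rewrite lee_fin mulr_ge0 ?powR_ge0.
have := @ge0_nondecreasing_set_cvg_integral _ (measurableTypeR R) _ S (fun t => (f t)%:E) mu ndS mS mf f0.
rewrite US => H.
rewrite -(cvg_lim _ H) //.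
apply: lime_le; first by apply/cvg_ex; eexists; exact: H.
apply: nearW => n.
have dFa (t : R) : 0 < t -> is_derive t 1 Fa (K / (g + 1) * ((g + 1) * t `^ (g + 1 - 1))).
  by move=> t0; apply: is_deriveZ; exact: is_derive1_powR.
have cf (t : R) : 0 < t -> {for t, continuous f}.
  move=> t0; apply: cvgM; first exact: cvg_cst.
  exact: powR_cont_pos.
have cFa (t : R) : 0 < t -> {for t, continuous Fa}.
  move=> t0; have [d1 _] := dFa t t0.
  by apply: differentiable_continuous; apply/derivable1_diffP.
rewrite (@continuous_FTC2 _ f Fa _ _ (SnT n)).
- rewrite -EFinB lee_fin lerBlDr lerDl /Fa mulr_ge0 ?powR_ge0// divr_ge0// ltW//.
- apply: continuous_in_subspaceT => t; rewrite inE/= in_itv/= => /andP[h1 _].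
  exact: cf (lt_le_trans (Sn n) h1).
- split.
  + move=> t; rewrite in_itv/= => /andP[h1 _].
    by have [] := dFa t (lt_trans (Sn n) h1).
  + exact/cvg_at_right_filter/cFa.
  + exact/cvg_at_left_filter/cFa.
- move=> t; rewrite in_itv/= => /andP[h1 _].
  rewrite derive1E; have [_ ->] := dFa t (lt_trans (Sn n) h1).
  by rewrite /f addrK; field; rewrite gt_eqF.
Qed.
End T.


Section T.
Context {R : realType}.
Local Notation mu := (@lebesgue_measure R).

Lemma ktilde_gt0 (m : R) : 0 < m -> m < 1 -> 0 < ktilde m.
Proof.
move=> m0 m1; rewrite /ktilde divr_gt0 ?subr_gt0// !mulr_gt0//.
by rewrite addr_gt0.
Qed.

Lemma Ical_gt0 (m : R) : 0 < m -> m < 1 -> 0 < Ical m.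
Proof.
move=> m0 m1.
set e := 2 * m / (1 - m).
have e0 : 0 <= e by rewrite divr_ge0 ?mulr_ge0 ?subr_ge0// ltW.
rewrite /Ical /Rintegral -/e; apply: fine_gt0; apply/andP; split.
- have : \forall x \near (0 : R), 2^-1 < cos x.
    have h1 : cos x @[x --> (0:R)] --> (1:R).
      by rewrite -cos0; exact: continuous_cos.
    have h2 : 2^-1 < (1:R) by rewrite invf_lt1// ltr1n.
    exact: (cvgr_gt _ h1 _ h2).
  case/nbhs_ballP => d d0 Hb.
  set r := Num.min (d / 2) (pi / 2).
  have r0 : 0 < r by rewrite lt_min !divr_gt0// pi_gt0.
  have rpi : r <= pi / 2 by rewrite ge_min lexx orbT.
  have hr x : - r <= x <= r -> 2^-1 < cos x.
    move=> hx; apply: Hb; rewrite -ball_normE /= sub0r normrN.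
    apply: (le_lt_trans (y := r)); first by rewrite ler_norml.
    have rd : r <= d / 2 by rewrite ge_min lexx.
    by apply: (le_lt_trans rd); rewrite ltr_pdivrMr// ltr_pMr// ltr1n.
  set c := 2^-1 `^ e.
  have c0 : 0 < c by rewrite powR_gt0.
  have H1 : (\int[mu]_(x in `[(- (pi / 2))%R, (pi / 2)%R]) ((cst c%:E) \_ `[(- r)%R, r] x) <=
     \int[mu]_(x in `[(- (pi / 2))%R, (pi / 2)%R]) ((cos x) `^ e)%:E)%E.
    apply: le_int_nm => x _; rewrite /patch; case: ifPn => [hx|_].
    - by rewrite lee_fin ltW.
    - by [].
    - move: hx; rewrite inE/= in_itv/= => hx; rewrite lee_fin.
      apply: (ge0_ler_powR e0); rewrite ?nnegrE ?invr_ge0//.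
        by rewrite ltW// (lt_trans _ (hr x hx))// invr_gt0.
      exact/ltW/hr.
    - by rewrite /point/= lee_fin powR_ge0.
  apply: lt_le_trans H1.
  rewrite -integral_mkcondr setIidr; last first.
    move=> x /=; rewrite !in_itv/= => /andP[h1 h2].
    by rewrite (le_trans _ h1) ?lerN2// (le_trans h2).
  rewrite integral_cst//= lebesgue_measure_itv/= lte_fin gtrN// -EFinD -EFinM lte_fin.
  by rewrite opprK mulr_gt0// addr_gt0.
- apply: (@le_lt_trans _ _ (\int[mu]_(x in `[(- (pi / 2))%R, (pi / 2)%R]) (cst 1%:E x))%E).
    apply: le_int_nm => x _; first by rewrite lee_fin powR_ge0.
    rewrite lee_fin /=; have [cx0|cx0] := ltP (cos x) 0; first by rewrite lt0_powR1.
    apply: (@le_trans _ _ (1 `^ e)); last by rewrite powR1.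
    by apply: (ge0_ler_powR e0); rewrite ?nnegrE ?cos_le1.

  rewrite integral_cst//= lebesgue_measure_itv/= lte_fin.
  case: ifPn => _; last by rewrite mule0 ltry.
  by rewrite -EFinD mul1e ltry.
Qed.
End T.


Section T.
Context {R : realType}.
Local Notation mu := (@lebesgue_measure R).

Lemma lt1_2q (m q : R) : 0 < 1 - m -> 1 - m < 2 * q -> 1 < 2 * (q / (1 - m)).
Proof. by move=> h1 h2; rewrite mulrA ltr_pdivlMr// mul1r. Qed.

Lemma Kq_ge0 (nu m q : R) : 0 < 1 - m -> 1 - m < 2 * q -> 0 <= Kq nu m q.
Proof.
move=> h1 h2; rewrite /Kq mulr_ge0// divr_ge0 ?powR_ge0// subr_ge0 ltW//.
exact: lt1_2q.
Qed.

Lemma mf_U (m q : R) : measurable_fun setT (fun z : R * R => ((Ucal m z.1 z.2) `^ q)%:E).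
Proof. by apply/measurable_EFinP; exact: mUcal. Qed.

Lemma strip_bound (m T s l nu : R) : 0 < m -> m < 1 -> 3^-1 < m ->
  0 < nu -> 2 * nu <= Dcal m -> 2 * nu <= ktilde m ->
  0 <= s -> s < l -> l <= T ->
  (\int[(mu \x mu)%E]_(z in `]s, l] `*` setT) ((Ucal m z.1 z.2) `^ m)%:E <=
    ((Kq nu m m * T `^ (alpha m * (1 - m))) * (l - s))%:E)%E.
Proof.
move=> m0 m1 m3 nu0 hD hk s0 sl lT.
have hm : 0 < 1 - m by rewrite subr_gt0.
have h2 : 1 - m < 2 * m.
  have : 1 < 3 * m by rewrite -ltr_pdivrMl// mulrC mul1r.
  lra.
rewrite tonelli_strip//; last 2 first.
  exact: mf_U.
  by move=> z; rewrite lee_fin powR_ge0.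
set C := Kq nu m m * T `^ (alpha m * (1 - m)).
apply: (@le_trans _ _ (\int[mu]_(t in `]s, l]) (cst C%:E) t)%E).
  apply: le_int_nm => t; first by move=> _; apply: integral_ge0 => x _; rewrite lee_fin powR_ge0.
  rewrite /= in_itv/= => /andP[st tl].
  have t0 : 0 < t by exact: le_lt_trans s0 st.
  apply: le_trans (inner_bound m t m nu m0 m1 t0 m0 nu0 hD hk (lt1_2q m m hm h2)) _.
  rewrite lee_fin /C ler_wpM2l ?Kq_ge0//.
  have ha : 0 <= alpha m * (1 - m).
    by apply: mulr_ge0; [rewrite /alpha invr_ge0 addr_ge0// ltW | exact: ltW hm].
  have tT : t <= T by exact: le_trans tl lT.
  by apply: (ge0_ler_powR ha); rewrite ?nnegrE //; [exact: ltW t0 | exact: le_trans (ltW t0) tT].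
by rewrite integral_cst//= lebesgue_measure_itv/= lte_fin sl -EFinB -EFinM.
Qed.

Lemma part3 (m T nu : R) : 0 < m -> m < 1 -> 5^-1 < m -> 0 < T ->
  0 < nu -> 2 * nu <= Dcal m -> 2 * nu <= ktilde m ->
  (\int[(mu \x mu)%E]_(z in `]0%R, T] `*` setT) ((Ucal m z.1 z.2) `^ (2 * m))%:E < +oo)%E.
Proof.
move=> m0 m1 m5 T0 nu0 hD hk.
have hm : 0 < 1 - m by rewrite subr_gt0.
have h2 : 1 - m < 2 * (2 * m).
  have : 1 < 5 * m by rewrite -ltr_pdivrMl// mulrC mul1r.
  lra.
have q0 : 0 < 2 * m by rewrite mulr_gt0.
rewrite tonelli_strip//; last 2 first.
  exact: mf_U.
  by move=> z; rewrite lee_fin powR_ge0.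
apply: (@le_lt_trans _ _ (\int[mu]_(t in `]0%R, T])
   (Kq nu m (2 * m) * t `^ (alpha m * (1 - 2 * m)))%:E)%E).
  apply: le_int_nm => t; first by move=> _; apply: integral_ge0 => x _; rewrite lee_fin powR_ge0.
  rewrite /= in_itv/= => /andP[t0 tl].
  exact: (inner_bound m t (2 * m) nu m0 m1 t0 q0 nu0 hD hk (lt1_2q m (2 * m) hm h2)).
have g1 : -1 < alpha m * (1 - 2 * m).
  have m10 : 0 < m + 1 by rewrite addr_gt0.
  rewrite /alpha mulrC -ltr_pdivrMr// ?invr_gt0// invrK.
  lra.
apply: le_lt_trans (Lt _ _ _ (Kq_ge0 nu m (2 * m) hm h2) g1 T0) _.
exact: ltry.
Qed.

Lemma Ucal_ge0 (m t x : R) : 0 <= Ucal m t x.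
Proof. by rewrite /Ucal mulr_ge0 ?powR_ge0. Qed.

Lemma part4 (m k nu : R) : 0 < m -> m < 1 -> 3 / 5 < m -> 0 < k ->
  0 < nu -> 2 * nu <= Dcal m -> 2 * nu <= ktilde m ->
  (\int[mu]_(x in setT) (`|x| ^+ 4 * Ucal m k x)%:E < +oo)%E.
Proof.
move=> m0 m1 m35 k0 nu0 hD hk.
have hm : 0 < 1 - m by rewrite subr_gt0.
set a := 1 / (1 - m).
set c := k `^ alpha m.
have c0 : 0 < c by rewrite powR_gt0.
set M := k `^ (- (alpha m * 1)) * nu `^ (- a).
have M0 : 0 <= M by rewrite mulr_ge0 ?powR_ge0.
have ha : 1 < 2 * a - 4.
  have : 3 < 5 * m by rewrite -ltr_pdivrMl// mulrC.
  rewrite /a => h; rewrite ltrBrDr mulrA ltr_pdivlMr//; lra.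
apply: (@le_lt_trans _ _ (\int[mu]_x
   ((c ^+ 4 * M) * (1 + `|x| / c) `^ (- (2 * a - 4)))%:E)%E); last first.
  by rewrite full_int ?ltry// mulr_ge0// exprn_ge0// ltW.
apply: le_int_nm => x _; first by rewrite lee_fin mulr_ge0 ?exprn_ge0 ?Ucal_ge0.
rewrite lee_fin.
set P := 1 + `|x| / c.
have P1 : 1 <= P by rewrite lerDl divr_ge0// ltW.
have P0 : 0 < P by exact: lt_le_trans ltr01 P1.
have hU := Ucal_bound m k x 1 nu m0 m1 k0 ltr01 nu0 hD hk.
rewrite powRr1 ?Ucal_ge0// -/c -/a -/P in hU.
have hx : `|x| ^+ 4 <= c ^+ 4 * P `^ 4.
  rewrite (powR_mulrn _ (ltW P0)) -exprMn.
  apply: lerXn2r; rewrite ?nnegrE; [exact: normr_ge0 | exact: mulr_ge0 (ltW c0) (ltW P0) | ].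
  by rewrite /P mulrDr mulr1 mulrCA divff ?gt_eqF// mulr1 lerDr ltW.
apply: le_trans (ler_pM _ _ hx hU) _.
- exact: exprn_ge0.
- exact: Ucal_ge0.
have -> : P `^ (- (2 * a - 4)) = P `^ 4 * P `^ (- (2 * a)).
  rewrite -powRD; last by apply/implyP => _; rewrite gt_eqF.
  by rewrite opprB addrC.
by rewrite /M le_eqVlt; apply/orP; left; apply/eqP; ring.
Qed.
End T.

Theorem lemma4p2 (R : realType) (T m : R) (hT : 0 < T) (hm0 : 0 < m) (hm1 : m < 1) :
  [/\
  (* (i) *)
  (3^-1 < m -> exists p : R, 2 <= p /\ exists Cp : R,
     forall s l : R, 0 <= s -> s < l -> l <= T ->
     (\int[(@lebesgue_measure R \x @lebesgue_measure R)%E]_(z in `]s, l] `*` setT)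
        ((Ucal m z.1 z.2) `^ (p * (m - 1) / 2 + 1))%:E <= (Cp * (l - s))%:E)%E),
  (* (ii) *)
  (3^-1 < m ->
     (\int[(@lebesgue_measure R \x @lebesgue_measure R)%E]_(z in `]0%R, T] `*` setT)
        ((Ucal m z.1 z.2) `^ m)%:E < +oo)%E),
  (* (iii) *)
  (5^-1 < m ->
     (\int[(@lebesgue_measure R \x @lebesgue_measure R)%E]_(z in `]0%R, T] `*` setT)
        ((Ucal m z.1 z.2) `^ (2 * m))%:E < +oo)%E) &
  (* (iv) *)
  (3 / 5 < m -> forall kappa : R, 0 < kappa ->
     (\int[@lebesgue_measure R]_(x in setT)
        (`|x| ^+ 4 * Ucal m kappa x)%:E < +oo)%E)].

Proof.
have k0 := ktilde_gt0 m hm0 hm1.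
have D0 : 0 < Dcal m.
  by rewrite /Dcal powR_gt0// divr_gt0 ?Ical_gt0// sqrtr_gt0.
set nu := Num.min (Dcal m) (ktilde m) / 2.
have nu0 : 0 < nu by rewrite divr_gt0// lt_min D0 k0.
have hD : 2 * nu <= Dcal m by rewrite /nu mulrC divfK ?pnatr_eq0// ge_min lexx.
have hk : 2 * nu <= ktilde m by rewrite /nu mulrC divfK ?pnatr_eq0// ge_min lexx orbT.
split.
- move=> h3; exists 2; split => //.
  exists (Kq nu m m * T `^ (alpha m * (1 - m))) => s l s0 sl lT.
  have -> : 2 * (m - 1) / 2 + 1 = m by field.
  exact: strip_bound.
- move=> h3.
  apply: le_lt_trans (strip_bound m T 0 T nu hm0 hm1 h3 nu0 hD hk (lexx 0) hT (lexx T)) _.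
  exact: ltry.
- move=> h5; exact: (part3 m T nu hm0 hm1 h5 hT nu0 hD hk).
- move=> h35 kappa kp; exact: (part4 m kappa nu hm0 hm1 h35 kp nu0 hD hk).
Qed.
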